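(* Let $n>k+\ell$, and let $\mathcal F\subset\binom{[n]}{k}$ (non-trivial) and $\mathcal G\subset\binom{[n]}{\ell}$ be cross-intersecting families forming a saturated pair, shifted ad extremis with respect to $\tau(\mathcal F)\ge2$, and not both initial. Then the 2-cover graph $\hat{\mathcal H}$ of $\mathcal F$ is partially shifted.
   Context: Non-trivial: nonempty and not a star (a star is a family all of whose members share a common element); $\tau(\mathcal F)\ge2$ means $\mathcal F$ is not a star. Cross-intersecting: $F\cap G\ne\emptyset$ for all $F\in\mathcal F,G\in\mathcal G$; saturated pair: adding any further $k$-set to $\mathcal F$ or $\ell$-set to $\mathcal G$ destroys cross-intersection. Shifting: for $i<j$, $S_{ij}(F)=(F\setminus\{j\})\cup\{i\}$ if $j\in F$, $i\notin F$, $(F\setminus\{j\})\cup\{i\}\notin\mathcal F$, else $S_{ij}(F)=F$; $S_{ij}(\mathcal F)=\{S_{ij}(F):F\in\mathcal F\}$. Shifted ad extremis with respect to $\tau(\mathcal F)\ge2$: for every $1\le i<j\le n$, either $S_{ij}(\mathcal F)=\mathcal F$ and $S_{ij}(\mathcal G)=\mathcal G$, or $S_{ij}(\mathcal F)$ is a star. Initial: with $(a_1,\dots,a_k)\prec(b_1,\dots,b_k)$ iff $a_i\le b_i$ for all $i$, a family is initial if $A\prec B\in\mathcal F$ implies $A\in\mathcal F$. The 2-cover graph $\hat{\mathcal H}$ has vertex set $[n]$ and edges $\{i,j\}$ such that every $F\in\mathcal F$ meets $\{i,j\}$. A graph on $[n]$ is partially shifted if for all distinct $i,j,x$ with $x<j$: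 $\{i,j\}$ an edge and $\{x,j\}$ a non-edge imply $\{i,x\}$ is an edge. *)

(* Defs.v *)
(* Ground set [n] is modelled as 'I_n = {0,...,n-1}
   (order-preserving relabelling of {1,...,n}). *)
From mathcomp Require Import all_boot all_order.
Set Implicit Arguments. Unset Strict Implicit. Unset Printing Implicit Defensive.

Section Defs.
Variable n : nat.
Notation fam := {set {set 'I_n}}.

Definition uniform (k : nat) (FF : fam) : Prop :=
  forall F, F \in FF -> #|F| = k.

Definition star (FF : fam) : Prop :=
  exists x : 'I_n, forall F, F \in FF -> x \in F.

(* non-trivial: nonempty and not a star (tau(F) >= 2) *)
Definition nontrivial (FF : fam) : Prop := FF != set0 /\ ~ star FF.

Definition cross_intersecting (FF GG : fam) : Prop :=
  forall F G, F \in FF -> G \in GG -> F :&: G != set0.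

Definition saturated (k l : nat) (FF GG : fam) : Prop :=
  (forall A : {set 'I_n}, #|A| = k -> A \notin FF ->
      ~ cross_intersecting (A |: FF) GG) /\
  (forall B : {set 'I_n}, #|B| = l -> B \notin GG ->
      ~ cross_intersecting FF (B |: GG)).

Definition shift_set (i j : 'I_n) (FF : fam) (F : {set 'I_n}) : {set 'I_n} :=
  if (j \in F) && (i \notin F) && ((i |: (F :\ j)) \notin FF)
  then i |: (F :\ j) else F.

Definition shift (i j : 'I_n) (FF : fam) : fam :=
  [set shift_set i j FF F | F in FF].

Definition shifted_ad_extremis (FF GG : fam) : Prop :=
  forall i j : 'I_n, i < j ->
    (shift i j FF = FF /\ shift i j GG = GG) \/ star (shift i j FF).

Definition elems (A : {set 'I_n}) : seq nat := sort leq (map val (enum A)).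

Definition prec (A B : {set 'I_n}) : Prop :=
  #|A| = #|B| /\ forall t, t < #|A| -> nth 0 (elems A) t <= nth 0 (elems B) t.

Definition initial (FF : fam) : Prop :=
  forall A B : {set 'I_n}, prec A B -> B \in FF -> A \in FF.

Definition cover2_edge (FF : fam) (i j : 'I_n) : Prop :=
  i != j /\ forall F, F \in FF -> (i \in F) || (j \in F).

Definition partially_shifted (E : 'I_n -> 'I_n -> Prop) : Prop :=
  forall i j x : 'I_n, i != j -> i != x -> j != x -> x < j ->
    E i j -> ~ E x j -> E i x.

End Defs.

(* Main.v *)
Require Import Defs.
From mathcomp Require Import all_boot all_order.

Theorem proposition1p3 (n k l : nat)
  (FF GG : {set {set 'I_n}}) :
  k + l < n ->
  uniform k FF -> uniform l GG ->
  nontrivial FF ->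
  cross_intersecting FF GG ->
  saturated k l FF GG ->
  shifted_ad_extremis FF GG ->
  ~ (initial FF /\ initial GG) ->
  partially_shifted (cover2_edge FF).
Proof.
move=> _ _ _ [_ nstar] _ _ sae _ i j x nij nix njx xj [_ Eij] nEjx.
split=> // F HF.
case: (sae x j xj) => [[shF _] | [y Hy]].
- case iF: (i \in F) => //=.
  have := Eij F HF; rewrite iF /= => jF.
  case xF: (x \in F) => //.
  exfalso.
  have HG: x |: (F :\ j) \in FF.
    have [//|Hn] := boolP (x |: (F :\ j) \in FF).
    have Hs : x |: (F :\ j) \in shift x j FF.
      apply/imsetP. exists F => //.
      by rewrite /shift_set jF xF Hn.
    by rewrite shF in Hs; rewrite Hs in Hn.
  have := Eij _ HG.
  by rewrite !inE iF (negbTE nix) (negbTE njx) eqxx /= andbF.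
- exfalso; apply: nEjx; split; first by rewrite eq_sym.
  move=> F0 HF0.
  have [//|H0] := boolP ((x \in F0) || (j \in F0)).
  exfalso.
  move: H0; rewrite negb_or => /andP [xF0 jF0].
  have yF0 : y \in F0.
    have := Hy _ (imset_f (shift_set x j FF) HF0).
    by rewrite /shift_set (negbTE jF0).
  case: (eqVneq y x) => [yx | nyx].
    by move: xF0; rewrite -yx yF0.
  apply: nstar; exists y => G HG.
  have := Hy _ (imset_f (shift_set x j FF) HG).
  rewrite /shift_set; case: ifP => // _.
  by rewrite !inE (negbTE nyx) /= => /andP [].
Qed.
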